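(* (a) For every $e\in E$ there exist $i,c,d\in\mathbb{Z}$ with $c,d\geq0$ such that $e=c\epsilon^i+d\epsilon^{i+1}$. (b) Every $e\in E$ is represented over $\mathcal{O}_K$ by the 8-ary form $x_1^2+x_2^2+x_3^2+x_4^2+\epsilon(x_5^2+x_6^2+x_7^2+x_8^2)$, i.e., $e$ equals this form evaluated at some $x_1,\dots,x_8\in\mathcal{O}_K$.
   Context: $D>1$ squarefree, $K=\mathbb{Q}(\sqrt D)$, $\mathcal{O}_K$ its ring of integers. $\epsilon$ is the totally positive fundamental unit of $\mathcal{O}_K$ (the smallest unit $>1$ whose conjugate is also positive; it has norm $1$). $E=\mathbb{N}_0[\epsilon,\epsilon^{-1}]$ is the set of all finite sums $\sum_{i=i_0}^{i_1}e_i\epsilon^i$ with $i_0,i_1\in\mathbb{Z}$ and integers $e_i\geq0$. *)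

(* Defs.v *)
(* K = Q(sqrt D) is realized inside an arbitrary real closed field R. *)
From HB Require Import structures.
From mathcomp Require Import all_boot all_order all_algebra.
Set Implicit Arguments. Unset Strict Implicit. Unset Printing Implicit Defensive.
Import Order.TTheory GRing.Theory Num.Theory.
Local Open Scope ring_scope.

Definition squarefree (D : nat) : Prop :=
  forall p : nat, prime p -> ~~ (p ^ 2 %| D)%N.

Definition sqD (R : rcfType) (D : nat) : R := Num.sqrt (D%:R).

Definition omegaK (R : rcfType) (D : nat) : R :=
  if (D %% 4 == 1)%N then (1 + sqD R D) / 2 else sqD R D.

Definition inOK (R : rcfType) (D : nat) (x : R) : Prop :=
  exists a b : int, x = a%:~R + b%:~R * omegaK R D.

Definition unitOK (R : rcfType) (D : nat) (x : R) : Prop :=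
  x != 0 /\ inOK D x /\ inOK D x^-1.

(* totally positive: x > 0 and its Galois conjugate a - b sqrt D > 0,
   where x = a + b sqrt D with a, b rational (unique since sqrt D irrational) *)
Definition totpos (R : rcfType) (D : nat) (x : R) : Prop :=
  0 < x /\ exists a b : rat,
    x = ratr a + ratr b * sqD R D /\ 0 < ratr a - ratr b * sqD R D.

Definition tp_fund_unit (R : rcfType) (D : nat) (eps : R) : Prop :=
  [/\ unitOK D eps, totpos D eps, 1 < eps &
      forall u : R, unitOK D u -> totpos D u -> 1 < u -> eps <= u].

(* E = N_0[eps, eps^-1]: finite sums sum_{k} e_k eps^(i0 + k) with e_k in N *)
Definition in_Eeps (R : rcfType) (eps : R) (x : R) : Prop :=
  exists (i0 : int) (s : seq nat),
    x = \sum_(k < size s) (nth 0%N s k)%:R * eps ^ (i0 + (k : nat)%:Z).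

(* Main.v *)
Require Import Defs.
From mathcomp Require Import all_boot all_order all_algebra.
From mathcomp Require Import zify ring lra.
Import Order.TTheory GRing.Theory Num.Theory.
Local Open Scope ring_scope.

Definition sq4 (n : int) := exists a b c d : int, n = a*a + b*b + c*c + d*d.

Lemma sq4_mul m n : sq4 m -> sq4 n -> sq4 (m * n).
Proof.
move=> [a [b [c [d ->]]]] [A [B [C [D ->]]]].
exists (a*A+b*B+c*C+d*D), (a*B-b*A+c*D-d*C), (a*C-b*D-c*A+d*B), (a*D+b*C-c*B-d*A).
ring.
Qed.

Lemma sqmod2 (a : int) : ((a * a) %% 2 = a %% 2)%Z.
Proof. nia. Qed.

Lemma pair2 (a b : int) : ((a - b) %% 2 = 0)%Z ->
  exists u v : int, a * a + b * b = 2 * (u * u + v * v).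
Proof.
move=> h; exists ((a + b) %/ 2)%Z, ((a - b) %/ 2)%Z.
have e1 : a = ((a + b) %/ 2)%Z + ((a - b) %/ 2)%Z by lia.
have e2 : b = ((a + b) %/ 2)%Z - ((a - b) %/ 2)%Z by lia.
set u := ((a + b) %/ 2)%Z in e1 e2 *; set v := ((a - b) %/ 2)%Z in e1 e2 *.
rewrite e1 e2; ring.
Qed.

Lemma sq4_half k : sq4 (2 * k) -> sq4 k.
Proof.
move=> [a [b [c [d E]]]].
have ha := sqmod2 a; have hb := sqmod2 b; have hc := sqmod2 c; have hd := sqmod2 d.
have fin : forall a b c d : int, ((a - b) %% 2 = 0)%Z -> ((c - d) %% 2 = 0)%Z ->
   2 * k = a * a + b * b + c * c + d * d -> sq4 k.
  move=> a' b' c' d' h1 h2 E'.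
  have [u [v e1]] := pair2 _ _ h1; have [w [z e2]] := pair2 _ _ h2.
  exists u, v, w, z.
  have : 2 * k = 2 * (u * u + v * v + w * w + z * z) by rewrite E' -addrA e1 e2; ring.
  lia.
have [h1|h1] : ((a - b) %% 2 = 0)%Z \/ ((a - b) %% 2 = 1)%Z by lia.
  apply: (fin a b c d) => //; lia.
have [h2|h2] : ((a - c) %% 2 = 0)%Z \/ ((a - c) %% 2 = 1)%Z by lia.
  apply: (fin a c b d) => //; [lia | rewrite E; ring].
apply: (fin a d b c); [lia | lia | rewrite E; ring].
Qed.

Lemma sqge0 (x : int) : 0 <= x * x.
Proof. by rewrite -expr2 sqr_ge0. Qed.

Lemma sqle (x h : int) : - h <= x <= h -> x * x <= h * h.
Proof. move=> /andP[h1 h2]; nia. Qed.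

Lemma sq0 (x : int) : x * x = 0 -> x = 0.
Proof. by move/eqP; rewrite mulf_eq0 orbb => /eqP. Qed.

Lemma descent_odd (p m a b c d : int) :
  1 < m -> m < p -> (m %% 2 = 1)%Z -> (forall q : int, p <> m * q) ->
  m * p = a*a + b*b + c*c + d*d ->
  exists r : int, 0 < r /\ r < m /\ sq4 (r * p).
Proof.
move=> m1 mp modd ndiv E.
set h := ((m - 1) %/ 2)%Z.
have hm : m = 2 * h + 1 by rewrite /h; lia.
set A := (((a + h) %% m)%Z - h); set al := ((a + h) %/ m)%Z.
set B := (((b + h) %% m)%Z - h); set be := ((b + h) %/ m)%Z.
set C := (((c + h) %% m)%Z - h); set ga := ((c + h) %/ m)%Z.
set D := (((d + h) %% m)%Z - h); set de := ((d + h) %/ m)%Z.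
have ea : a = A + m * al by rewrite /A /al; lia.
have eb : b = B + m * be by rewrite /B /be; lia.
have ec : c = C + m * ga by rewrite /C /ga; lia.
have ed : d = D + m * de by rewrite /D /de; lia.
have bA : - h <= A <= h by rewrite /A; lia.
have bB : - h <= B <= h by rewrite /B; lia.
have bC : - h <= C <= h by rewrite /C; lia.
have bD : - h <= D <= h by rewrite /D; lia.
clearbody A B C D al be ga de.
set r := p - (2*A*al + m*al*al + 2*B*be + m*be*be + 2*C*ga + m*ga*ga + 2*D*de + m*de*de).
have Er : m * r = A*A + B*B + C*C + D*D.
  have : m * p = (A + m * al)*(A + m * al) + (B + m * be)*(B + m * be)
      + (C + m * ga)*(C + m * ga) + (D + m * de)*(D + m * de) by rewrite -ea -eb -ec -ed.
  move=> Ep; rewrite /r mulrBr Ep; ring.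
clearbody r.
have sA := sqge0 A; have sB := sqge0 B; have sC := sqge0 C; have sD := sqge0 D.
have r0 : 0 <= r.
  by rewrite -(pmulr_rge0 _ (_ : 0 < m)) ?Er; lia.
have rm : r < m.
  rewrite -(ltr_pM2l (_ : 0 < m)); last by lia.
  have := sqle _ _ bA; have := sqle _ _ bB; have := sqle _ _ bC; have := sqle _ _ bD.
  have hh : (2*h+1)*(2*h+1) = 4*(h*h) + 4*h + 1 by ring.
  have h0 : 0 <= h by lia.
  rewrite Er hm hh; lia.
have rne : r != 0.
  apply/eqP => r0'; rewrite r0' mulr0 in Er.
  have A0 : A = 0 by apply: sq0; lia.
  have B0 : B = 0 by apply: sq0; lia.
  have C0 : C = 0 by apply: sq0; lia.
  have D0 : D = 0 by apply: sq0; lia.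
  apply: (ndiv (al*al + be*be + ga*ga + de*de)).
  have m0 : m != 0 by lia.
  apply: (mulfI m0).
  rewrite E ea eb ec ed A0 B0 C0 D0; ring.
exists r; split; first by lia.
split => //.
have X1 : a*A + b*B + c*C + d*D = m * (r + al*A + be*B + ga*C + de*D).
  by rewrite ea eb ec ed !mulrDr Er; ring.
have X2 : a*B - b*A + c*D - d*C = m * (al*B - be*A + ga*D - de*C).
  by rewrite ea eb ec ed; ring.
have X3 : a*C - b*D - c*A + d*B = m * (al*C - be*D - ga*A + de*B).
  by rewrite ea eb ec ed; ring.
have X4 : a*D + b*C - c*B - d*A = m * (al*D + be*C - ga*B - de*A).
  by rewrite ea eb ec ed; ring.
exists (r + al*A + be*B + ga*C + de*D), (al*B - be*A + ga*D - de*C),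
       (al*C - be*D - ga*A + de*B), (al*D + be*C - ga*B - de*A).
have mm0 : m * m != 0 by lia.
apply: (mulfI mm0).
have -> : m * m * (r * p) = (m * p) * (m * r) by ring.
rewrite E Er.
set Y1 := (r + al*A + be*B + ga*C + de*D).
set Y2 := (al*B - be*A + ga*D - de*C).
set Y3 := (al*C - be*D - ga*A + de*B).
set Y4 := (al*D + be*C - ga*B - de*A).
have -> : m * m * (Y1 * Y1 + Y2 * Y2 + Y3 * Y3 + Y4 * Y4) =
  (m * Y1) * (m * Y1) + (m * Y2) * (m * Y2) + (m * Y3) * (m * Y3) + (m * Y4) * (m * Y4) by ring.
rewrite -X1 -X2 -X3 -X4; ring.
Qed.

Lemma ndiv_prime (p n : nat) : prime p -> (1 < n < p)%N ->
  forall q : int, p%:Z <> n%:Z * q.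
Proof.
move=> pr /andP[n1 np] [k|k] E.
  have : (n %| p)%N by rewrite -PoszM in E; case: E => ->; apply: dvdn_mulr.
  by case/primeP: pr => _ /[apply] /orP[] /eqP; lia.
have : (0 < p)%N by apply: prime_gt0.
move: E; rewrite NegzE; nia.
Qed.

Lemma reduce (p : nat) : prime p -> forall n : nat, (0 < n < p)%N ->
  sq4 (n%:Z * p%:Z) -> sq4 p%:Z.
Proof.
move=> pr; elim/ltn_ind => n IH /andP[n0 np] Hs.
have [n1|n1] := eqVneq n 1%N; first by move: Hs; rewrite n1 mul1r.
have [ev|od] := boolP ((n %% 2) == 0)%N.
  apply: (IH (n %/ 2)%N); first by lia.
    by apply/andP; split; lia.
  apply: sq4_half.
  have -> : 2 * ((n %/ 2)%N%:Z * p%:Z) = n%:Z * p%:Z by lia.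
  exact: Hs.
have [a [b [c [d E]]]] := Hs.
have [r [r0 [rn Hr]]] : exists r : int, 0 < r /\ r < n%:Z /\ sq4 (r * p%:Z).
  apply: (@descent_odd p n a b c d) => //; try lia.
  by apply: ndiv_prime => //; lia.
case: r r0 rn Hr => [r|r] r0 rn Hr; last by lia.
apply: (IH r) => //.
all: try (apply/andP; split); lia.
Qed.

Lemma sq_eq_contra (p h x y : nat) : prime p -> (h.*2 < p)%N -> (x < y)%N -> (y <= h)%N ->
  (x%:R ^+ 2 = y%:R ^+ 2 :> 'F_p) -> False.
Proof.
move=> pr hp xy yh E.
have : (p %| (y - x) * (y + x))%N.
  rewrite (dvdn_pcharf (pchar_Fp pr)) natrM natrB ?(ltnW xy) // natrD.
  apply/eqP.
  have -> : (y%:R - x%:R) * (y%:R + x%:R) = y%:R ^+ 2 - x%:R ^+ 2 :> 'F_p by ring.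
  by rewrite E subrr.
rewrite Euclid_dvdM // => /orP[] /dvdn_leq; lia.
Qed.

Lemma pigeon (p h : nat) : prime p -> p = h.*2.+1 ->
  exists x y : nat, [/\ (x <= h)%N, (y <= h)%N & (p %| x * x + y * y + 1)%N].
Proof.
move=> pr ph.
pose f (z : 'I_h.+1 + 'I_h.+1) : 'F_p :=
  match z with inl x => (x : nat)%:R ^+ 2 | inr y => -1 - (y : nat)%:R ^+ 2 end.
have : ~~ injectiveb f.
  apply/negP => /injectiveP /leq_card; rewrite (card_Fp pr) card_sum card_ord; lia.
case/injectivePn => z1 [z2 nz E].
have hp : (h.*2 < p)%N by lia.
have ordle : forall z : 'I_h.+1, (z <= h)%N by move=> z; have := ltn_ord z; rewrite ltnS.
have key : forall (x y : 'I_h.+1), x != y -> (x : nat)%:R ^+ 2 = (y : nat)%:R ^+ 2 :> 'F_p -> False.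
  move=> x y nxy Exy.
  have [xy|yx|exy] := ltngtP x y.
  - exact: (@sq_eq_contra p h x y pr hp xy (ordle y) Exy).
  - exact: (@sq_eq_contra p h y x pr hp yx (ordle x) (esym Exy)).
  - by move: nxy; rewrite (val_inj exy) eqxx.
have mixed : forall (x y : 'I_h.+1), (x : nat)%:R ^+ 2 = -1 - (y : nat)%:R ^+ 2 :> 'F_p ->
   exists x y : nat, [/\ (x <= h)%N, (y <= h)%N & (p %| x * x + y * y + 1)%N].
  move=> x y Exy; exists x, y; split; [exact: ordle | exact: ordle|].
  rewrite (dvdn_pcharf (pchar_Fp pr)) !natrD !natrM -!expr2 Exy; apply/eqP; ring.
case: z1 z2 nz E => [x|x] [y|y] /= nz E.
- by case: (key x y nz E).
- exact: mixed E.
- exact: mixed (esym E).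
- by case: (key x y nz); move/addrI/oppr_inj: E.
Qed.

Lemma sq4_prime (p : nat) : prime p -> sq4 p%:Z.
Proof.
move=> pr.
have p1 := prime_gt1 pr.
have [ev|od] := boolP (p %% 2 == 0)%N.
  have p2 : p = 2%N.
    have dv2 : (2 %| p)%N by rewrite /dvdn.
    case/primeP: pr => _ H; have := H 2%N dv2.
    by case/orP => // /eqP.
  by exists 1, 1, 0, 0; rewrite p2.
have ph : p = (p %/ 2).*2.+1.
  have o : (p %% 2 = 1)%N by move: od; rewrite modn2; case: (odd p).
  rewrite -muln2; lia.
have [x [y [xh yh dv]]] := @pigeon p _ pr ph.
set m0 := ((x * x + y * y + 1) %/ p)%N.
have Em : (m0 * p = x * x + y * y + 1)%N by rewrite /m0 divnK.
apply: (@reduce p pr m0).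
  apply/andP; split.
    have : (0 < m0 * p)%N by rewrite Em addn1.
    by rewrite muln_gt0 => /andP[].
  have p0 : (0 < p)%N by apply: prime_gt0.
  rewrite -(ltn_pmul2r p0) Em.
  have h1 : (x * x <= (p %/ 2) * (p %/ 2))%N by apply: leq_mul.
  have h2 : (y * y <= (p %/ 2) * (p %/ 2))%N by apply: leq_mul.
  move: ph p1 h1 h2; set k := (p %/ 2)%N => ph p1 h1 h2.
  have pp : (p * p = 4 * (k * k) + 4 * k + 1)%N.
    by rewrite ph -muln2 mulSn mulnS; ring.
  have kk : (0 < k)%N by move: p1; rewrite ph; case: (k).
  rewrite pp; lia.
exists x%:Z, y%:Z, 1, 0.
by rewrite -PoszM Em mulr1 mulr0 addr0 !PoszD !PoszM.
Qed.

Lemma four_squares (n : nat) : sq4 n%:Z.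
Proof.
elim/ltn_ind: n => n IH.
have [n1|n1] := leqP n 1.
  by case: n n1 {IH} => [|[|]] // _; [exists 0, 0, 0, 0 | exists 1, 0, 0, 0].
have pr := pdiv_prime n1.
have -> : n = (pdiv n * (n %/ pdiv n))%N by rewrite mulnC divnK // pdiv_dvd.
rewrite PoszM; apply: sq4_mul; first exact: sq4_prime.
apply: IH; apply: ltn_Pdiv; [exact: prime_gt1 | lia].
Qed.

Lemma no_rat_sqrt (D : nat) : (1 < D)%N -> squarefree D -> forall w : rat, w * w <> D%:R.
Proof.
move=> D1 sqf w Ew.
have ncop := coprime_num_den w.
have E1 : (numq w * numq w)%:~R = (D%:Z * (denq w * denq w))%:~R :> rat.
  rewrite !rmorphM /= !numqE; have -> : (D%:Z)%:~R = D%:R :> rat by []. rewrite -Ew; ring.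
have E2 := intr_inj E1.
have E3 : (`|numq w| ^ 2 = D * `|denq w| ^ 2)%N.
  by rewrite !expnS !expn0 !muln1 -!abszM E2 abszM.
set n := `|numq w|%N in E3 ncop; set d := `|denq w|%N in E3 ncop.
have d1 : d = 1%N.
  have c2 : coprime (n ^ 2) (d ^ 2) by rewrite coprimeXl // coprimeXr.
  have dv : (d ^ 2 %| n ^ 2)%N by rewrite E3 dvdn_mull.
  move: c2; rewrite /coprime gcdnC; move/gcdn_idPl: dv => -> /eqP h2.
  rewrite expnS expn1 in h2; nia.
rewrite d1 expnS expn1 !muln1 in E3.
have n1 : (1 < n)%N by nia.
have pr := pdiv_prime n1.
have := sqf _ pr; rewrite -E3.
have -> : (n * n = n ^ 2)%N by rewrite expnS expn1.
by rewrite dvdn_exp2r ?pdiv_dvd.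
Qed.

Lemma sqD_sq (R : rcfType) (D : nat) : sqD R D * sqD R D = D%:R.
Proof. by rewrite -expr2 /sqD sqr_sqrtr // ler0n. Qed.

Lemma irr (R : rcfType) (D : nat) : (1 < D)%N -> squarefree D ->
  forall u v : rat, ratr u + ratr v * sqD R D = 0 -> u = 0 /\ v = 0.
Proof.
move=> D1 sqf u v E.
have v0 : v = 0.
  have [//|vn0] := eqVneq v 0; exfalso.
  have es : sqD R D = ratr (- u / v).
    rewrite fmorph_div rmorphN /=.
    have rv : ratr v != 0 :> R by rewrite fmorph_eq0.
    apply: (mulfI rv); rewrite mulrCA mulfV // mulr1.
    by apply/eqP; rewrite -addr_eq0 addrC E.
  have NR := @no_rat_sqrt D D1 sqf (- u / v); apply: NR.

  apply: (fmorph_inj (@ratr R)); rewrite rmorphM /= -es sqD_sq.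
  by rewrite rmorph_nat.
split => //; move: E; rewrite v0 rmorph0 mul0r addr0 => /eqP.
by rewrite fmorph_eq0 => /eqP.
Qed.

Definition rc (R : rcfType) (D : nat) (u v : rat) (x : R) := x = ratr u + ratr v * sqD R D.
Arguments rc {R}.

Lemma rc_uniq (R : rcfType) (D : nat) u v u' v' (x : R) : (1 < D)%N -> squarefree D ->
  rc D u v x -> rc D u' v' x -> u = u' /\ v = v'.
Proof.
move=> D1 sqf E1 E2.
have := @irr R D D1 sqf (u - u') (v - v').
rewrite !rmorphB /= => /(_ _)[].
  have -> : 0 = x - x by rewrite subrr.
  by rewrite {1}E1 E2; ring.
by move=> /eqP; rewrite subr_eq0 => /eqP -> /eqP; rewrite subr_eq0 => /eqP ->.
Qed.

Arguments rc_uniq {R D u v u' v' x}.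

Lemma rc_mul (R : rcfType) (D : nat) u v u' v' (x y : R) :
  rc D u v x -> rc D u' v' y -> rc D (u * u' + D%:R * v * v') (u * v' + u' * v) (x * y).
Proof.
rewrite /rc => -> ->; rewrite !rmorphD !rmorphM /= rmorph_nat.
have := sqD_sq R D; set s := sqD R D => ss.
rewrite -ss; ring.
Qed.

Arguments rc_mul {R D u v u' v' x y}.

Definition ok0 (D : nat) : rat := if (D %% 4 == 1)%N then 2^-1 else 0.
Definition ok1 (D : nat) : rat := if (D %% 4 == 1)%N then 2^-1 else 1.

Lemma rc_omega (R : rcfType) (D : nat) : rc D (ok0 D) (ok1 D) (omegaK R D).
Proof.
rewrite /rc /omegaK /ok0 /ok1; case: ifP => _.
  by rewrite fmorphV /= rmorph_nat mulrDl mul1r mulrC.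
by rewrite rmorph0 rmorph1 add0r mul1r.
Qed.

Lemma rc_OK (R : rcfType) (D : nat) (a b : int) :
  rc D (a%:~R + b%:~R * ok0 D) (b%:~R * ok1 D) (a%:~R + b%:~R * omegaK R D : R).
Proof.
have := @rc_omega R D; rewrite /rc => ->.
rewrite !rmorphD !rmorphM /= !ratr_int; ring.
Qed.

Lemma norm_int (D : nat) (a b : int) :
  exists z : int, (a%:~R + b%:~R * ok0 D) ^+ 2 - D%:R * (b%:~R * ok1 D) ^+ 2 = z%:~R :> rat.
Proof.
rewrite /ok0 /ok1; case: ifP => /eqP H.
  have HD : D%:R = 4 * (D %/ 4)%:R + 1 :> rat.
    by rewrite {1}(divn_eq D 4) H natrD natrM mulrC.
  exists (a * a + a * b - (D %/ 4)%:Z * b * b).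
  rewrite HD; rewrite !rmorphD !rmorphM /= !rmorphN /=.
  by field.
exists (a * a - D%:Z * b * b).
rewrite mulr0 addr0 mulr1 !rmorphB !rmorphM /=.
have -> : (D%:Z)%:~R = D%:R :> rat by [].
ring.
Qed.

Lemma trace_int (D : nat) (a b : int) :
  exists t : int, t%:~R = 2 * (a%:~R + b%:~R * ok0 D) :> rat.
Proof.
rewrite /ok0; case: ifP => _.
  by exists (2 * a + b); rewrite rmorphD !rmorphM /=; field.
by exists (2 * a); rewrite mulr0 addr0 rmorphM.
Qed.

Lemma eps_quad (R : rcfType) (D : nat) (eps : R) : (1 < D)%N -> squarefree D ->
  tp_fund_unit D eps -> exists t : int, eps * eps = t%:~R * eps - 1.
Proof.
move=> D1 sqf [[e0 [[a [b Ea]] [a' [b' Ea']]]] [epos [r [q [Erq cpos]]]] e1 _].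
set u := a%:~R + b%:~R * ok0 D; set v := b%:~R * ok1 D.
set u' := a'%:~R + b'%:~R * ok0 D; set v' := b'%:~R * ok1 D.
have R1 : rc D u v eps by rewrite Ea; apply: rc_OK.
have R2 : rc D u' v' eps^-1 by rewrite Ea'; apply: rc_OK.
have [rE qE] := rc_uniq D1 sqf Erq R1.
have R3 := rc_mul R1 R2.
have R4 : rc D 1 0 (eps * eps^-1) by rewrite mulfV // /rc rmorph1 rmorph0 mul0r addr0.
have [P1 P2] := rc_uniq D1 sqf R3 R4.
have [z Ez] := norm_int D a b.
have [z' Ez'] := norm_int D a' b'.
rewrite -/u -/v in Ez; rewrite -/u' -/v' in Ez'.
have zz : z * z' = 1.
  apply: (@intr_inj rat); rewrite rmorphM /= -Ez -Ez' rmorph1.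
  have -> : (u ^+ 2 - D%:R * v ^+ 2) * (u' ^+ 2 - D%:R * v' ^+ 2) =
    (u * u' + D%:R * v * v') ^+ 2 - D%:R * (u * v' + u' * v) ^+ 2 by ring.
  by rewrite P1 P2; ring.
have ss := sqD_sq R D.
have zpos : 0 < z.
  rewrite -(ltr0z R) -ratr_int -Ez rmorphB rmorphM /= !rmorphXn /= rmorph_nat -ss.
  have -> : ratr u ^+ 2 - sqD R D * sqD R D * ratr v ^+ 2 =
     (ratr r - ratr q * sqD R D) * eps by rewrite R1 rE qE; ring.
  by apply: mulr_gt0 => //; apply: lt_trans e1.
have z1 : z = 1 by move: zz zpos; clear; move=> h1 h2; have [h3|h3] := lerP z' 0; nia.
rewrite z1 in Ez.
have [t Et] := trace_int D a b.
exists t.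
have Et' : t%:~R = 2 * ratr u :> R by rewrite -ratr_int Et rmorphM /= rmorph_nat.
have : ratr (u ^+ 2 - D%:R * v ^+ 2) = 1 :> R by rewrite Ez rmorph1.
rewrite rmorphB rmorphM /= !rmorphXn /= rmorph_nat -ss => EN.
rewrite Et' R1; apply/eqP; rewrite -subr_eq0; apply/eqP.
transitivity (1 - (ratr u ^+ 2 - sqD R D * sqD R D * ratr v ^+ 2)).
  ring.
by rewrite EN subrr.
Qed.

Set Implicit Arguments. Unset Strict Implicit.

Definition PP (R : rcfType) (t : int) (e x y : R) :=
  exists p q : int, x = p%:~R + q%:~R * e /\ y = p%:~R + q%:~R * e^-1.
Arguments PP {R}.

Lemma inv_rel (R : rcfType) (t : int) (e : R) : e * e = t%:~R * e - 1 -> 1 < e ->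
  e^-1 = t%:~R - e /\ e^-1 * e^-1 = t%:~R * e^-1 - 1.
Proof.
move=> He e1.
have e0 : e != 0 by apply/eqP => e0; rewrite e0 in e1; lra.
have E1 : e^-1 = t%:~R - e.
  apply: (mulfI e0); rewrite mulfV // mulrBr He; ring.
split => //.
rewrite E1; transitivity (t%:~R * t%:~R - 2 * t%:~R * e + e * e); first ring.
by rewrite He; ring.
Qed.

Lemma mul_rel (R : rcfType) (t : int) (w : R) (p q p' q' : int) : w * w = t%:~R * w - 1 ->
  (p%:~R + q%:~R * w) * (p'%:~R + q'%:~R * w) =
  (p * p' - q * q')%:~R + (p * q' + p' * q + q * q' * t)%:~R * w.
Proof.
move=> Hw; rewrite !(rmorphD, rmorphN, rmorphM) /=.
have -> : (p%:~R + q%:~R * w) * (p'%:~R + q'%:~R * w) =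
  p%:~R * p'%:~R + (p%:~R * q'%:~R + p'%:~R * q%:~R) * w + q%:~R * q'%:~R * (w * w) :> R by ring.
rewrite Hw; ring.
Qed.

Lemma PP_add (R : rcfType) (t : int) (e x y x' y' : R) :
  PP t e x y -> PP t e x' y' -> PP t e (x + x') (y + y').
Proof.
move=> [p [q [-> ->]]] [p' [q' [-> ->]]]; exists (p + p'), (q + q').
by rewrite !rmorphD /=; split; ring.
Qed.

Lemma PP_mul (R : rcfType) (t : int) (e x y x' y' : R) : e * e = t%:~R * e - 1 -> 1 < e ->
  PP t e x y -> PP t e x' y' -> PP t e (x * x') (y * y').
Proof.
move=> He e1 [p [q [-> ->]]] [p' [q' [-> ->]]].
have [_ Hi] := inv_rel He e1.
exists (p * p' - q * q'), (p * q' + p' * q + q * q' * t).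
by split; apply: mul_rel.
Qed.

Lemma PP_nat (R : rcfType) (t : int) (e : R) (n : nat) : PP t e n%:R n%:R.
Proof. by exists n%:Z, 0; rewrite !mul0r !addr0. Qed.

Lemma PP_exp (R : rcfType) (t : int) (e : R) : e * e = t%:~R * e - 1 -> 1 < e ->
  forall k : int, PP t e (e ^ k) (e ^ (- k)).
Proof.
move=> He e1.
have [Ei _] := inv_rel He e1.
have P1 : PP t e e e^-1 by exists 0, 1; rewrite !mul1r !add0r.
have P2 : PP t e e^-1 e by exists t, (-1); rewrite Ei !mulN1r; split => //; ring.
have Pn : forall (a b : R), PP t e a b -> forall n : nat, PP t e (a ^+ n) (b ^+ n).
  move=> a b Pab; elim => [|n IH]; first by rewrite !expr0; exact: (PP_nat t e 1).
  by rewrite !exprS; apply: PP_mul.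
case=> n.
  by rewrite -exprnN -exprVn; apply: Pn.
rewrite NegzE opprK -exprnN -exprVn; apply: Pn; exact: P2.
Qed.

Lemma findi (R : rcfType) (e x y : R) : 1 < e -> 0 <= y -> forall (n : nat) (a : int),
  e ^ (a + a) * y <= x -> x <= e ^ ((a + n) + (a + n)) * y ->
  exists i : int, e ^ (i + i) * y <= x /\ x <= e ^ ((i + 1) + (i + 1)) * y.
Proof.
move=> e1 y0; elim => [|n IH] a lo hi.
  exists a; split => //; apply: (le_trans hi); apply: ler_wpM2r => //.
  apply: ler_weXz2l; [lra | lia].
have [h|h] := lerP x (e ^ ((a + 1) + (a + 1)) * y).
  by exists a.
apply: (IH (a + 1)); first exact: ltW.
by have -> : a + 1 + n%:Z = a + n.+1%:Z by lia.
Qed.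

Lemma partA (R : rcfType) (t : int) (e : R) : e * e = t%:~R * e - 1 -> 1 < e ->
  forall x, in_Eeps e x ->
  exists (i : int) (c d : nat), x = c%:R * e ^ i + d%:R * e ^ (i + 1).
Proof.
move=> He e1 x [a [s ->]].
have e0 : e != 0 by apply/eqP => e0; rewrite e0 in e1; lra.
have epos : 0 < e by lra.
have e1' : 1 <= e by lra.
set x0 := \sum_(k < size s) _.
set y := \sum_(k < size s) (nth 0%N s k)%:R * e ^ (- (a + (k : nat)%:Z)).
have Pxy : PP t e x0 y.
  apply: (big_ind2 (PP t e)); first by exact: (PP_nat t e 0).
    by move=> ? ? ? ?; apply: PP_add.
  by move=> k _; apply: PP_mul => //; [exact: PP_nat | exact: PP_exp].
have y0 : 0 <= y.
  by apply: sumr_ge0 => k _; apply: mulr_ge0; [exact: ler0n | apply: exprz_ge0; exact: ltW].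
have lo : e ^ (a + a) * y <= x0.
  rewrite mulr_sumr; apply: ler_sum => k _; rewrite mulrCA -expfzDr //.
  apply: ler_wpM2l; first exact: ler0n.
  apply: ler_weXz2l => //; lia.
have hi : x0 <= e ^ ((a + (size s)%:Z) + (a + (size s)%:Z)) * y.
  rewrite mulr_sumr; apply: ler_sum => k _; rewrite mulrCA -expfzDr //.
  apply: ler_wpM2l; first exact: ler0n.
  apply: ler_weXz2l => //; have := ltn_ord k; lia.
have [i [loi hii]] := findi e1 y0 lo hi.
have := PP_mul He e1 Pxy (PP_exp He e1 (- i)); rewrite opprK.
move=> [p [q [Eu Ev]]].
set u := x0 * e ^ (- i) in Eu; set v := y * e ^ i in Ev.
have X1 : e ^ (i + i) * y * e ^ (- i) = v.
  rewrite mulrAC -expfzDr // mulrC /v.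
  by have -> : i + i + - i = i by lia.
have X2 : e ^ ((i + 1) + (i + 1)) * y * e ^ (- i) = e * e * v.
  rewrite mulrAC -expfzDr //.
  have -> : i + 1 + (i + 1) + - i = i + 1 + 1 by lia.
  by rewrite !expfzDr // expr1z /v; ring.
have gi : 0 < e ^ (- i) by apply: exprz_gt0.
have vu : v <= u by rewrite -X1 /u; apply: ler_wpM2r => //; exact: ltW.
have uv : u <= e * e * v by rewrite -X2 /u; apply: ler_wpM2r => //; exact: ltW.
have ei : e^-1 < e by apply: (lt_trans _ e1); rewrite invf_lt1.
have q0 : 0 <= q.
  have : 0 <= q%:~R * (e - e^-1) :> R.
    have -> : q%:~R * (e - e^-1) = u - v by rewrite Eu Ev; ring.
    by rewrite subr_ge0.
  by rewrite pmulr_lge0 ?subr_gt0 // ler0z.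
have p0 : 0 <= p.
  have : 0 <= p%:~R * (e - e^-1) :> R.
    have -> : p%:~R * (e - e^-1) = e * v - e^-1 * u.
      rewrite Eu Ev.
      transitivity (p%:~R * (e - e^-1) + q%:~R * (e * e^-1) - q%:~R * (e^-1 * e) :> R).
        by rewrite mulfV // mulVf // ; ring.
      ring.
    rewrite subr_ge0.
    have : e^-1 * u <= e^-1 * (e * e * v).
      by apply: ler_wpM2l => //; rewrite invr_ge0; exact: ltW.
    by rewrite !mulrA mulVf // mul1r.
  by rewrite pmulr_lge0 ?subr_gt0 // ler0z.
exists i, `|p|%N, `|q|%N.
rewrite !natr_absz !ger0_norm //.
have -> : x0 = u * e ^ i by rewrite /u -mulrA -expfzDr // addNr expr0z mulr1.
by rewrite Eu expfzDr // expr1z; ring.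
Qed.

Unset Implicit Arguments. Set Strict Implicit.

Lemma omega_sq (R : rcfType) (D : nat) :
  exists k0 k1 : int, omegaK R D * omegaK R D = k0%:~R + k1%:~R * omegaK R D.
Proof.
have ss := sqD_sq R D.
rewrite /omegaK; case: ifP => /eqP H.
  have HD : D%:R = 4 * (D %/ 4)%:R + 1 :> R.
    by rewrite {1}(divn_eq D 4) H natrD natrM mulrC.
  exists (D %/ 4)%:Z, 1.
  rewrite mul1r.
  have -> : (1 + sqD R D) / 2 * ((1 + sqD R D) / 2) =
     (1 + 2 * sqD R D + sqD R D * sqD R D) / 4 :> R by field.
  rewrite ss HD; by field.
exists D%:Z, 0; rewrite mul0r addr0 ss; by [].
Qed.

Lemma inOK_mul (R : rcfType) (D : nat) (x y : R) : inOK D x -> inOK D y -> inOK D (x * y).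
Proof.
have [k0 [k1 Ew]] := omega_sq R D.
move=> [a [b ->]] [c [d ->]].
exists (a * c + b * d * k0), (a * d + b * c + b * d * k1).
rewrite !rmorphD !rmorphM /=.
transitivity (a%:~R * c%:~R + (a%:~R * d%:~R + b%:~R * c%:~R) * omegaK R D
   + b%:~R * d%:~R * (omegaK R D * omegaK R D) :> R); first ring.
rewrite Ew; ring.
Qed.

Lemma inOK_int (R : rcfType) (D : nat) (z : int) : inOK D (z%:~R : R).
Proof. by exists z, 0; rewrite mul0r addr0. Qed.

Lemma inOK_expz (R : rcfType) (D : nat) (e : R) : inOK D e -> inOK D e^-1 ->
  forall i : int, inOK D (e ^ i).
Proof.
move=> h1 h2.
have hn : forall (a : R), inOK D a -> forall n : nat, inOK D (a ^+ n).
  move=> a ha; elim => [|n IH]; first by rewrite expr0; exact: (inOK_int R D 1).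
  by rewrite exprS; apply: inOK_mul.
case=> n; first exact: hn.
by rewrite NegzE -exprnN -exprVn; apply: hn.
Qed.

Lemma parity (i : int) : exists m : int, i = m + m \/ i = m + m + 1.
Proof. exists (i %/ 2)%Z; lia. Qed.

Lemma natsq4 (R : rcfType) (c : nat) : exists a1 a2 a3 a4 : int,
  c%:R = a1%:~R ^+ 2 + a2%:~R ^+ 2 + a3%:~R ^+ 2 + a4%:~R ^+ 2 :> R.
Proof.
have [a1 [a2 [a3 [a4 E]]]] := four_squares c.
exists a1, a2, a3, a4.
have := congr1 (fun z : int => z%:~R : R) E.
by rewrite /= !rmorphD !rmorphM /= -!expr2.
Qed.

Theorem lemma9 (R : rcfType) (D : nat) (eps : R) :
  (1 < D)%N -> squarefree D -> tp_fund_unit D eps ->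
  (forall e : R, in_Eeps eps e ->
     exists (i : int) (c d : nat), e = c%:R * eps ^ i + d%:R * eps ^ (i + 1))
  /\
  (forall e : R, in_Eeps eps e ->
     exists x1 x2 x3 x4 x5 x6 x7 x8 : R,
       (inOK D x1 /\ inOK D x2 /\ inOK D x3 /\ inOK D x4 /\
        inOK D x5 /\ inOK D x6 /\ inOK D x7 /\ inOK D x8) /\
       e = x1 ^+ 2 + x2 ^+ 2 + x3 ^+ 2 + x4 ^+ 2
           + eps * (x5 ^+ 2 + x6 ^+ 2 + x7 ^+ 2 + x8 ^+ 2)).
Proof.
move=> D1 sqf tp.
have [t He] := @eps_quad R D eps D1 sqf tp.
have tp' := tp; case: tp' => [[e0 [ok1 okv]] _ e1 _].
have PA := partA He e1.
split => //.
move=> x /PA [i [c [d ->]]].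
have [a1 [a2 [a3 [a4 Ec]]]] := natsq4 R c.
have [b1 [b2 [b3 [b4 Ed]]]] := natsq4 R d.
have OK := @inOK_expz R D eps ok1 okv.
have OKm : forall (z : int) (m : int), inOK D (z%:~R * eps ^ m).
  by move=> z m; apply: inOK_mul; [exact: inOK_int | exact: OK].
have [m [->|->]] := parity i.
  exists (a1%:~R * eps ^ m), (a2%:~R * eps ^ m), (a3%:~R * eps ^ m), (a4%:~R * eps ^ m),
         (b1%:~R * eps ^ m), (b2%:~R * eps ^ m), (b3%:~R * eps ^ m), (b4%:~R * eps ^ m).
  split; first by do !split; apply: OKm.
  rewrite !expfzDr // expr1z Ec Ed; ring.
exists (b1%:~R * eps ^ (m + 1)), (b2%:~R * eps ^ (m + 1)), (b3%:~R * eps ^ (m + 1)),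
       (b4%:~R * eps ^ (m + 1)),
       (a1%:~R * eps ^ m), (a2%:~R * eps ^ m), (a3%:~R * eps ^ m), (a4%:~R * eps ^ m).
split; first by do !split; apply: OKm.
rewrite !expfzDr // expr1z Ec Ed; ring.
Qed.
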